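(* For every $\varepsilon>0$ the series $$\sum_{\boldsymbol{\mathcal E}\in\operatorname{Div}_{\mathrm{eff}}(\mathscr C)^7}|\mu_S(\boldsymbol{\mathcal E})|\,q^{-(\frac12+\varepsilon)\left[\deg\mathcal E_0+\sum_{i=1}^3\deg\mathcal E_i+\sum_{i=1}^3\deg\mathcal F_i\right]}$$ converges.
   Context: $k$ is a finite field with $q$ elements, $\mathscr C$ a smooth projective geometrically integral curve over $k$, $\operatorname{Div}_{\mathrm{eff}}(\mathscr C)$ its monoid of effective divisors. Elements of $\operatorname{Div}_{\mathrm{eff}}(\mathscr C)^7$ are written $\boldsymbol{\mathcal E}=(\mathcal E_0,\mathcal E_1,\mathcal E_2,\mathcal E_3,\mathcal F_1,\mathcal F_2,\mathcal F_3)$. Let $\operatorname{Div}_{S,\mathrm{prim}}$ be the set of $\boldsymbol{\mathcal E}$ such that the gcd (at each closed point, the minimum of multiplicities) of the seven effective divisors $\sum_{j\neq i}\mathcal E_j+\sum_{j=1}^3\mathcal F_j$ ($i=1,2,3$), $\mathcal E_0+\sum_{j\neq i}(\mathcal E_j+\mathcal F_j)$ ($i=1,2,3$) and $\mathcal E_0+\sum_{j=1}^3\mathcal E_j$ is $0$ (indices $j$ in $\{1,2,3\}$). $\mu_S:\operatorname{Div}_{\mathrm{eff}}(\mathscr C)^7\to\mathbf C$ is the unique function with $\mathbf 1_{\operatorname{Div}_{S,\mathrm{prim}}}(\boldsymbol{\mathcal D})=\sum_{0\leq\boldsymbol{\mathcal E}\leq\boldsymbol{\mathcal D}}\mu_S(\boldsymbol{\mathcal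 E})$ for all $\boldsymbol{\mathcal D}$ (componentwise inequalities). *)

(* Defs.v *)
From HB Require Import structures.
From mathcomp Require Import all_boot all_order all_algebra all_field.
From mathcomp Require Import finmap.
From mathcomp Require Import boolp reals exp.
Set Implicit Arguments. Unset Strict Implicit. Unset Printing Implicit Defensive.
Import Order.TTheory GRing.Theory Num.Theory.

Local Open Scope ring_scope.
Local Open Scope fset_scope.

(* The curve is modelled through its set of closed points, a choiceType P,
   with a degree function deg : P -> nat. *)

Definition effdiv (P : choiceType) := {fsfun P -> nat with 0%N}.

Definition divdeg (P : choiceType) (deg : P -> nat) (D : effdiv P) : nat :=
  (\sum_(v <- finsupp D) D v * deg v)%N.

(* 7-tuples (E0,E1,E2,E3,F1,F2,F3) indexed 0..6 in this order. *)
Definition div7 (P : choiceType) := {ffun 'I_7 -> effdiv P}.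

Definition E0 {P : choiceType} (E : div7 P) := E (inord 0).
Definition Ei {P : choiceType} (E : div7 P) (i : nat) := E (inord i).       (* i = 1,2,3 *)
Definition Fi {P : choiceType} (E : div7 P) (i : nat) := E (inord (3 + i)). (* i = 1,2,3 *)

Definition div7_le (P : choiceType) (E D : div7 P) : Prop :=
  forall (k : 'I_7) (v : P), (E k v <= D k v)%N.

(* The seven effective divisors whose gcd must vanish, evaluated at v. *)
Definition prim_combos (P : choiceType) (E : div7 P) (v : P) : seq nat :=
  let e0 := E0 E v in
  let e i := Ei E i v in
  let f i := Fi E i v in
  [:: (\sum_(1 <= j < 4 | j != 1) e j + (f 1 + f 2 + f 3))%N;
      (\sum_(1 <= j < 4 | j != 2) e j + (f 1 + f 2 + f 3))%N;
      (\sum_(1 <= j < 4 | j != 3) e j + (f 1 + f 2 + f 3))%N;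
      (e0 + \sum_(1 <= j < 4 | j != 1) (e j + f j))%N;
      (e0 + \sum_(1 <= j < 4 | j != 2) (e j + f j))%N;
      (e0 + \sum_(1 <= j < 4 | j != 3) (e j + f j))%N;
      (e0 + (e 1 + e 2 + e 3))%N ].

(* E is in Div_{S,prim}: at every closed point the minimum of the
   multiplicities of the seven divisors is 0. *)
Definition prim7 (P : choiceType) (E : div7 P) : bool :=
  `[< forall v : P, 0%N \in prim_combos E v >].

(* mu satisfies the defining relation
   1_{prim}(D) = sum_{0 <= E <= D} mu(E) for all D
   (the finite range {E | E <= D} given by any duplicate-free enumeration). *)
Definition is_muS (R : realType) (P : choiceType) (mu : div7 P -> R) : Prop :=
  forall (D : div7 P) (s : seq (div7 P)), uniq s ->
    (forall E, E \in s <-> div7_le E D) ->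
    \sum_(E <- s) mu E = (prim7 D)%:R.

Definition totdeg (P : choiceType) (deg : P -> nat) (E : div7 P) : nat :=
  (\sum_(k < 7) divdeg deg (E k))%N.

(* Closed points of the curve: positive degrees, finitely many of each
   degree (enumerated by L d), and the point counts over F_{q^n} given by
   the Weil formula #C(F_{q^n}) = q^n + 1 - sum_i alpha_i^n, |alpha_i|^2 = q. *)
Definition curve_points (q : nat) (P : choiceType) (deg : P -> nat) : Prop :=
  (forall v, 0 < deg v)%N /\
  (forall d, exists s : seq P, uniq s /\ forall v, v \in s <-> deg v = d) /\
  exists (g : nat) (alpha : 'I_(2 * g) -> algC),
    (forall i, alpha i * (alpha i)^* = q%:R) /\
    forall (n : nat) (s : seq P), (0 < n)%N -> uniq s ->
      (forall v, v \in s <-> (deg v %| n)%N) ->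
      (\sum_(v <- s) deg v)%:R = (q ^ n)%:R + 1 - \sum_i alpha i ^+ n :> algC.

(* Main.v *)
Require Import Defs.
From HB Require Import structures.
From mathcomp Require Import all_boot all_order all_algebra all_field.
From mathcomp Require Import finmap.
From mathcomp Require Import boolp reals exp.
Import Order.TTheory GRing.Theory Num.Theory.
Set Implicit Arguments. Unset Strict Implicit. Unset Printing Implicit Defensive.
From mathcomp Require Import zify ring lra.
From mathcomp Require Import sequences.
Section A.
Variable P : choiceType.
Local Open Scope fset_scope.

Definition suppD (D : div7 P) : {fset P} := \bigcup_(k <- enum 'I_7) finsupp (D k).

Lemma suppDP (D : div7 P) k v : D k v != 0%N -> v \in suppD D.
Proof.
move=> H; apply/bigfcupP; exists k; first by rewrite mem_enum.
by rewrite mem_finsupp.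
Qed.

Definition mD (D : div7 P) : nat := \max_(k < 7) \max_(v <- suppD D) D k v.

Lemma mD_ge (D : div7 P) k v : (D k v <= mD D)%N.
Proof.
have [H|H] := eqVneq (D k v) 0%N; first by rewrite H.
rewrite /mD.
have h1 := @leq_bigmax _ (fun k => \max_(v <- suppD D) D k v) k.
have h2 := @leq_bigmax_seq _ (suppD D : seq P) predT (fun v => D k v) v (suppDP H) isT.
rewrite big_mkcond /= in h2.
apply: leq_trans h2 _. apply: leq_trans _ h1 => /=.
by rewrite big_mkcond.
Qed.

Definition TT (D : div7 P) := {ffun ('I_7 * suppD D) -> 'I_(mD D).+1}.

Definition toE (D : div7 P) (f : TT D) : div7 P :=
  [ffun k => [fsfun v : suppD D => (val (f (k, v)) : nat) | 0%N]].

Lemma toEE (D : div7 P) (f : TT D) (k : 'I_7) (v : P) : toE f k v = if insub v is Some u then val (f (k, u)) else 0%N.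
Proof. by rewrite ffunE fsfun_ffun; case: insubP. Qed.

Definition leb7 (E D : div7 P) : bool := `[< div7_le E D >].

Definition enumLe (D : div7 P) : seq (div7 P) :=
  undup [seq E <- [seq toE f | f <- enum {: TT D}] | leb7 E D].

Lemma enumLe_uniq (D : div7 P) : uniq (enumLe D).
Proof. exact: undup_uniq. Qed.

Lemma mem_enumLe (D E : div7 P) : E \in enumLe D <-> div7_le E D.
Proof.
rewrite mem_undup mem_filter; split.
  by case/andP => /asboolP.
move=> HE; apply/andP; split; first exact/asboolP.
apply/mapP.
exists [ffun kv : 'I_7 * suppD D => inord (E kv.1 (val kv.2)) : 'I_(mD D).+1].
  by rewrite mem_enum.
apply/ffunP => k; apply/fsfunP => v; rewrite toEE.
case: insubP => [u _ <-|].
  rewrite ffunE /= inordK // ltnS; exact: leq_trans (HE k _) (mD_ge _ _ _).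
move=> Hv; apply/eqP; rewrite -leqn0.
apply: leq_trans (HE k v) _; rewrite leqn0; apply/negPn/negP => H.
by move: Hv; rewrite (suppDP H).
Qed.

Definition pz (D : div7 P) v : bool := 0%N \in prim_combos D v.

Lemma pz_pattern (X Y : div7 P) (v : P) : (forall k, (X k v == 0%N) = (Y k v == 0%N)) -> pz X v = pz Y v.
Proof.
move=> H.
rewrite /pz /prim_combos /E0 /Ei /Fi !inE /index_iota /= !big_cons !big_nil /=.
rewrite !addn0 !(eq_sym 0%N) !addn_eq0.
by rewrite !H.
Qed.

Lemma pz_single (X : div7 P) (v : P) (k0 : 'I_7) : (forall k, k != k0 -> X k v = 0%N) -> pz X v.
Proof.
move=> H.
rewrite /pz /prim_combos /E0 /Ei /Fi !inE /index_iota /= !big_cons !big_nil /=.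
rewrite !addn0 !(eq_sym 0%N) !addn_eq0.
have Hz : forall j, (j < 7)%N -> j != val k0 -> X (inord j) v == 0%N.
  move=> j hj hk; apply/eqP/H; by apply: contra hk => /eqP <- /=; rewrite inordK.
rewrite (_ : (3 + 1 = 4)%N) // (_ : (3 + 2 = 5)%N) // (_ : (3 + 3 = 6)%N) //.
move: (Hz 0%N isT) (Hz 1%N isT) (Hz 2%N isT) (Hz 3%N isT) (Hz 4%N isT) (Hz 5%N isT) (Hz 6%N isT).
case: k0 {H Hz} => [[|[|[|[|[|[|[|//]]]]]]] hk] /=;
do 7!(first [move=> /(_ isT) -> | move=> _]); by rewrite /= ?orbT ?andbT.
Qed.
End A.

Section B.
Variable P : choiceType.
Local Open Scope fset_scope.
Local Open Scope ring_scope.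

Definition sub1 (a : 'I_7 * P) (D : div7 P) : div7 P :=
  [ffun k => if k == a.1 then [fsfun D k with a.2 |-> (D k a.2).-1] else D k].

Lemma sub1E a D k v : sub1 a D k v = if (k, v) == a then (D k v).-1 else D k v.
Proof.
rewrite ffunE; case: a => k0 v0 /=; rewrite xpair_eqE.
case: eqP => [->|] //=; rewrite fsfun_withE; by case: eqP => [->|].
Qed.

Lemma div7_ext (E D : div7 P) : (forall k v, E k v = D k v) -> E = D.
Proof. by move=> H; apply/ffunP => k; apply/fsfunP => v; apply: H. Qed.

Lemma sub1C a b D : sub1 a (sub1 b D) = sub1 b (sub1 a D).
Proof.
apply: div7_ext => k v; rewrite !sub1E.
by case: ((k, v) == a); case: ((k, v) == b).
Qed.

Lemma sub1_le a D : div7_le (sub1 a D) D.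
Proof. move=> k v; rewrite sub1E; case: ifP => // _; exact: leq_pred. Qed.

Lemma le_refl7 (D : div7 P) : div7_le D D.
Proof. by []. Qed.

Lemma le_trans7 (X Y Z : div7 P) : div7_le X Y -> div7_le Y Z -> div7_le X Z.
Proof. move=> h1 h2 k v; exact: leq_trans (h1 k v) (h2 k v). Qed.

Definition agree (L : seq ('I_7 * P)) (E D : div7 P) : bool :=
  all (fun a => E a.1 a.2 == D a.1 a.2) L.

Variable R : realType.
Variable mu : div7 P -> R.
Hypothesis Hmu : is_muS mu.

Definition primR (D : div7 P) : R := (prim7 D)%:R.

Definition Phi (D : div7 P) (L : seq ('I_7 * P)) := \sum_(E <- enumLe D | agree L E D) mu E.

Lemma Phi_nil (D : div7 P) : Phi D [::] = primR D.
Proof.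
rewrite /Phi /agree /=. apply: Hmu; first exact: enumLe_uniq.
exact: mem_enumLe.
Qed.

Lemma Phi_cons (a : 'I_7 * P) (L : seq ('I_7 * P)) (D : div7 P) : a \notin L -> (0 < D a.1 a.2)%N ->
  Phi D (a :: L) = Phi D L - Phi (sub1 a D) L.
Proof.
move=> aL Da.
suff -> : Phi D L = Phi D (a :: L) + Phi (sub1 a D) L by rewrite addrK.
rewrite /Phi (bigID (fun E : div7 P => E a.1 a.2 == D a.1 a.2)) /=.
congr (_ + _).
  by apply: eq_bigl => E; rewrite /agree /= andbC.
rewrite -[LHS]big_filter -[RHS]big_filter; apply: perm_big; apply: uniq_perm.
- by rewrite filter_uniq // enumLe_uniq.
- by rewrite filter_uniq // enumLe_uniq.
have agS : forall E, agree L E (sub1 a D) = agree L E D.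
  move=> E; apply: eq_in_all => b bL; rewrite sub1E.
  case: b bL => k v bL /=; case: ifP => // /eqP hb; by rewrite -hb bL in aL.
move=> E; rewrite !mem_filter agS; case: (agree L E D) => //=.
apply/idP/idP.
- case/andP => Ha /mem_enumLe HE; apply/mem_enumLe => k v; rewrite sub1E.
  case: eqP => [hk|]; last by move=> _; exact: HE.
  rewrite -hk /= in Ha; have := HE k v; move: Ha => h1 h2.
  rewrite -ltnS prednK; last by move: Da; rewrite -hk.
  by rewrite ltn_neqAle h1 h2.
- move/mem_enumLe => HE; have HE' := le_trans7 HE (sub1_le a D).
  rewrite (proj2 (mem_enumLe _ _) HE') andbT.
  have := HE a.1 a.2; rewrite sub1E -surjective_pairing eqxx.
  move: Da; case: (D a.1 a.2) => //= n _ h; apply/eqP => he; move: h; rewrite he ltnn //.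
Qed.

Lemma Phi_full (L : seq ('I_7 * P)) (D : div7 P) : (forall k v, D k v != 0%N -> (k, v) \in L) -> Phi D L = mu D.
Proof.
move=> HL; rewrite /Phi -big_filter (@perm_big _ _ _ _ _ [:: D]) ?big_seq1 //.
apply: uniq_perm; first by rewrite filter_uniq // enumLe_uniq.
  by [].
move=> E; rewrite mem_filter inE; apply/idP/idP.
- case/andP => /allP Hag /mem_enumLe HE; apply/eqP/div7_ext => k v.
  have [h|h] := eqVneq (D k v) 0%N.
    by apply/eqP; rewrite h -leqn0; have := HE k v; rewrite h.
  exact/eqP/(Hag (k, v) (HL _ _ h)).
- move/eqP => ->; rewrite (proj2 (mem_enumLe _ _) (le_refl7 D)) andbT.
  by apply/allP.
Qed.

Fixpoint Mob (F : div7 P -> R) (D : div7 P) (L : seq ('I_7 * P)) : R :=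
  if L is a :: L' then Mob F D L' - Mob F (sub1 a D) L' else F D.

Lemma Phi_Mob (L : seq ('I_7 * P)) (D : div7 P) : uniq L -> (forall a, a \in L -> (0 < D a.1 a.2)%N) ->
  Phi D L = Mob primR D L.
Proof.
elim: L D => [|a L IH] D /=; first by move=> _ _; exact: Phi_nil.
case/andP => aL uL HL.
rewrite Phi_cons //; last by apply: HL; rewrite inE eqxx.
rewrite !IH //.
  move=> b bL; rewrite sub1E; case: eqP => [hb|_].
    by rewrite -surjective_pairing in hb; rewrite -hb bL in aL.
  by apply: HL; rewrite inE bL orbT.
by move=> b bL; apply: HL; rewrite inE bL orbT.
Qed.

Lemma Mob_bound (F : div7 P -> R) (D : div7 P) (L : seq ('I_7 * P)) : (forall X, `|F X| <= 1) -> `|Mob F D L| <= 2 ^+ size L.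
Proof.
move=> HF; elim: L D => [|a L IH] D /=; first by rewrite expr0.
have h1 := IH D; have h2 := IH (sub1 a D).
apply: le_trans (ler_normB _ _) _.
rewrite exprS; set t := 2 ^+ size L; move: h1 h2; rewrite -/t => h1 h2.
have : `|Mob F D L| + `|Mob F (sub1 a D) L| <= t + t by exact: lerD.
by rewrite -mulr2n mulr_natl.
Qed.

Lemma Mob_sub (F : div7 P -> R) (a : 'I_7 * P) (D : div7 P) (L : seq ('I_7 * P)) : Mob F (sub1 a D) L = Mob (F \o sub1 a) D L.
Proof.
elim: L D => [|b L IH] D //=.
by rewrite IH sub1C IH.
Qed.

Lemma Mob_congr (F G : div7 P -> R) (D : div7 P) (L : seq ('I_7 * P)) :
  (forall X, div7_le X D -> (forall b, b \notin L -> X b.1 b.2 = D b.1 b.2) -> F X = G X) ->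
  Mob F D L = Mob G D L.
Proof.
elim: L D => [|a L IH] D /= H.
  by apply: H => // b; rewrite /le_refl7.
congr (_ - _); apply: IH => X HX Hb; apply: H => //.
- by move=> b; rewrite inE negb_or => /andP [_ /Hb].
- exact: le_trans7 HX (sub1_le a D).
- move=> b; rewrite inE negb_or => /andP [ba /Hb ->].
  rewrite sub1E -surjective_pairing (negbTE ba) //.
Qed.

Lemma Mob_zero (F : div7 P -> R) (a : 'I_7 * P) (D : div7 P) (L : seq ('I_7 * P)) : a \notin L ->
  (forall X, div7_le X D -> X a.1 a.2 = D a.1 a.2 -> F X = F (sub1 a X)) ->
  Mob F D (a :: L) = 0.
Proof.
move=> aL H /=; rewrite Mob_sub (@Mob_congr F (F \o sub1 a)) ?subrr //.
by move=> X HX Hb; apply: H => //; apply: Hb.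
Qed.

End B.

Section C.
Variable P : choiceType.
Local Open Scope ring_scope.
Variable R : realType.
Variable mu : div7 P -> R.
Hypothesis Hmu : is_muS mu.

Definition atoms (E : div7 P) (U : seq P) : seq ('I_7 * P) :=
  undup [seq (k, v) | v <- U, k <- enum [set k | E k v != 0%N]].

Lemma mem_atoms (E : div7 P) (U : seq P) k v :
  ((k, v) \in atoms E U) = (v \in U) && (E k v != 0%N).
Proof.
rewrite mem_undup; apply/allpairsPdep/andP.
  by case=> v' [k' [Hv Hk [-> ->]]]; move: Hk; rewrite mem_enum inE.
by case=> Hv Hk; exists v, k; rewrite mem_enum inE.
Qed.

Lemma size_atoms (E : div7 P) (U : seq P) :
  (size (atoms E U) <= \sum_(v <- U) #|[set k | E k v != 0%N]|)%N.
Proof.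
apply: leq_trans (size_undup _) _.
by rewrite size_allpairs_dep sumnE big_map; apply: leq_sum => v _; rewrite cardE.
Qed.

Lemma mu_Mob (E : div7 P) (L : seq ('I_7 * P)) : uniq L ->
  (forall a, a \in L -> (0 < E a.1 a.2)%N) ->
  (forall k v, E k v != 0%N -> (k, v) \in L) -> mu E = Mob (@primR P R) E L.
Proof. by move=> uL pL cL; rewrite -(Phi_Mob Hmu) // (Phi_full mu). Qed.

Lemma primR_le1 (X : div7 P) : `|primR R X| <= 1.
Proof. by rewrite /primR; case: (prim7 X); rewrite ?normr1 ?normr0. Qed.

Lemma mu_bound (E : div7 P) (U : seq P) : (forall k v, E k v != 0%N -> v \in U) ->
  `|mu E| <= 2 ^+ (\sum_(v <- U) #|[set k | E k v != 0%N]|).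
Proof.
move=> HU; rewrite (@mu_Mob E (atoms E U)).
- apply: le_trans (Mob_bound E (atoms E U) (@primR_le1)) _.
  by rewrite ler_eXn2l ?ltr1n // size_atoms.
- exact: undup_uniq.
- by case=> k v; rewrite mem_atoms lt0n => /andP [].
- by move=> k v h; rewrite mem_atoms h (HU _ _ h).
Qed.

Lemma mu_zero_at (E : div7 P) (a : 'I_7 * P) : (0 < E a.1 a.2)%N ->
  (forall X, div7_le X E -> X a.1 a.2 = E a.1 a.2 -> prim7 X = prim7 (sub1 a X)) ->
  mu E = 0.
Proof.
move=> Ha H.
set L := a :: [seq b <- atoms E (suppD E) | b != a].
rewrite (@mu_Mob E L).
- apply: Mob_zero.
    by rewrite mem_filter eqxx.
  by move=> X HX HXa; rewrite /primR H.
- by rewrite /= mem_filter eqxx /= filter_uniq // undup_uniq.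
- move=> b; rewrite inE => /orP [/eqP -> //|]; rewrite mem_filter => /andP [_].
  by case: b => k v; rewrite mem_atoms lt0n => /andP [].
- move=> k v h; rewrite inE mem_filter mem_atoms h (suppDP h) andbT.
  by case: ((k, v) == a).
Qed.

Lemma prim_eq (X Y : div7 P) : (forall v, pz X v = pz Y v) -> prim7 X = prim7 Y.
Proof.
move=> H; rewrite /prim7; apply/idP/idP => /asboolP HX; apply/asboolP => v.
  by have := HX v; rewrite -/(pz X v) H.
by have := HX v; rewrite -/(pz Y v) -H.
Qed.

Lemma mu_props (E : div7 P) : mu E != 0 ->
  (forall k v, E k v <= 1)%N /\ (forall v, #|[set k | E k v != 0%N]| != 1%N).
Proof.
move=> Hmu0.
have H1 : forall k v, (E k v <= 1)%N.
  move=> k v; rewrite leqNgt; apply/negP => Hk.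
  move/eqP: Hmu0; apply; apply: (@mu_zero_at E (k, v)); first by apply: ltn_trans Hk.
  move=> X HX /= HXa; apply: prim_eq => w; apply: pz_pattern => k'.
  rewrite sub1E; case: ifP => [/eqP [-> ->]|//]; rewrite HXa.
  by case: (E k v) Hk => [|[|n]].
split => // v; apply/negP => /cards1P [k0 Hk0].
have Hk0v : E k0 v = 1%N.
  have : k0 \in [set k | E k v != 0%N] by rewrite Hk0 set11.
  rewrite inE => hne; have := H1 k0 v; move: hne; by case: (E k0 v) => [|[|n]].
have Hoth : forall k, k != k0 -> E k v = 0%N.
  move=> k hk; apply/eqP; apply: contraR hk => hk.
  have : k \in [set k | E k v != 0%N] by rewrite inE.
  by rewrite Hk0 inE.
move/eqP: Hmu0; apply; apply: (@mu_zero_at E (k0, v)); first by rewrite /= Hk0v.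
move=> X HX /= HXa; apply: prim_eq => w.
have [->|hw] := eqVneq w v.
  rewrite (@pz_single _ X v k0); last first.
    by move=> k hk; apply/eqP; have := HX k v; rewrite (Hoth k hk) leqn0.
  rewrite (@pz_single _ (sub1 (k0, v) X) v k0) //.
  move=> k hk; rewrite sub1E xpair_eqE (negbTE hk) /=.
  by apply/eqP; have := HX k v; rewrite (Hoth k hk) leqn0.
apply: pz_pattern => k; rewrite sub1E xpair_eqE (negbTE hw) andbF //.
Qed.

End C.

Section PB.
Local Open Scope ring_scope.

Lemma alpha_bound (q : nat) (a : algC) : (0 < q)%N -> a * a^* = q%:R -> `|a| <= q%:R.
Proof.
move=> q0 h.
rewrite -(@ler_pXn2r _ 2) // ?nnegrE ?normr_ge0 ?ler0n //.
rewrite normCK h -natrX ler_nat expnS expn1.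
by rewrite leq_pmulr.
Qed.

Lemma count_deg (q : nat) (P : choiceType) (deg : P -> nat) :
  (0 < q)%N -> curve_points q deg ->
  exists c : nat, forall (d : nat) (s : seq P), uniq s ->
    (forall v, v \in s -> deg v = d) -> (size s <= c * q ^ d)%N.
Proof.
move=> q0 [Hpos [Hfin [g [alpha [Halpha Hweil]]]]].
have [sd Hsd] := choice Hfin.
exists (2 * g + 2)%N => d s us Hs.
case: d Hs => [|d] Hs.
  case: s us Hs => [//|v s] _ Hs.
  by have := Hpos v; rewrite (Hs v (mem_head _ _)).
set t := undup (flatten [seq sd j | j <- iota 1 d.+1 & (j %| d.+1)%N]).
have memt : forall v, v \in t <-> (deg v %| d.+1)%N.
  move=> v; rewrite mem_undup; split.
    case/flatten_mapP => j; rewrite mem_filter => /andP [hj _].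
    by case: (Hsd j) => _ /(_ v) h /h ->.
  move=> hv; apply/flatten_mapP; exists (deg v).
    rewrite mem_filter hv mem_iota (Hpos v) /= add1n ltnS.
    exact: dvdn_leq hv.
  by case: (Hsd (deg v)) => _ /(_ v) h; apply/h.
have W := Hweil d.+1 t isT (undup_uniq _) memt.
have h1 : (size s <= size t)%N.
  apply: uniq_leq_size => // v /Hs hv; apply/memt; rewrite hv.
  exact: dvdnn.
have h2 : (size t <= \sum_(v <- t) deg v)%N.
  by rewrite -sum1_size; apply: leq_sum => v _; exact: Hpos.
apply: leq_trans h1 (leq_trans h2 _).
rewrite -(@ler_nat algC) -normr_nat W.
apply: le_trans (ler_normB _ _) _.
apply: le_trans (lerD (ler_normD _ _) (ler_norm_sum _ _ _)) _.
have ha : forall i, `|alpha i ^+ d.+1| <= (q ^ d.+1)%:R.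
  move=> i; rewrite normrX natrX; apply: lerXn2r; rewrite ?nnegrE ?normr_ge0 ?ler0n //.
  exact: alpha_bound.
apply: le_trans (lerD (lerD (lexx _) (lexx _)) (ler_sum _ (fun i _ => ha i))) _.
rewrite sumr_const card_ord normr1 ger0_norm ?ler0n //.
rewrite [X in X <= _](_ : _ = ((q ^ d.+1).+1 + q ^ d.+1 * (2 * g))%:R); last by rewrite natrD -natr1 natrM mulr_natr.
rewrite ler_nat.
rewrite mulnDl mulnDr.
have hq : (1 <= q ^ d.+1)%N by rewrite expn_gt0 q0.
rewrite mulnC [((2 * g) * _)%N]mulnC; lia.
Qed.
End PB.

Section M1.
Local Open Scope ring_scope.
Variable R : realType.

Lemma geom_le (r : R) n : 0 <= r -> r < 1 -> \sum_(d < n) r ^+ d <= (1 - r)^-1.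
Proof.
move=> r0 r1.
have H : (1 - r) * \sum_(d < n) r ^+ d = 1 - r ^+ n.
  elim: n => [|n IH]; first by rewrite big_ord0 expr0 mulr0 subrr.
  by rewrite big_ord_recr /= mulrDr IH exprSr; ring.
have h1 : 0 < 1 - r by rewrite subr_gt0.
rewrite -[X in X <= _](mulKf (lt0r_neq0 h1)) H.
rewrite -[X in _ <= X]mulr1; apply: ler_wpM2l; first by rewrite invr_ge0 ltW.
by rewrite gerBl exprn_ge0.
Qed.

Variable P : choiceType.
Variable deg : P -> nat.

Lemma totdeg_eq (E : div7 P) (U : {fset P}) :
  (forall k v, E k v != 0%N -> v \in U) -> (forall k v, E k v <= 1)%N ->
  totdeg deg E = (\sum_(v <- U) #|[set k | E k v != 0%N]| * deg v)%N.
Proof.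
move=> HU H1; rewrite /totdeg /divdeg.
rewrite (eq_bigr (fun k => \sum_(v <- U) E k v * deg v)%N); last first.
  move=> k _; apply: big_fset_incl.
    by apply/fsubsetP => v; rewrite mem_finsupp; apply: HU.
  by move=> v _; rewrite mem_finsupp negbK => /eqP ->.
rewrite exchange_big /=; apply: eq_bigr => v _.
rewrite -big_distrl /=; congr (_ * _)%N.
rewrite -sum1_card [RHS]big_mkcond /=; apply: eq_bigr => k _.
by rewrite inE; have := H1 k v; case: (E k v) => [|[|]].
Qed.

End M1.

Section M2.
Local Open Scope ring_scope.
Variable R : realType.
Variable P : choiceType.
Variable deg : P -> nat.
Variable mu : div7 P -> R.
Hypothesis Hmu : is_muS mu.
Variable x : R.
Hypothesis x0 : 0 <= x.
Hypothesis x1 : x <= 1.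

Definition psi (v : P) (A : {set 'I_7}) : R :=
  if A == set0 then 1 else 128 * (x ^+ 2) ^+ deg v.

Lemma local_bound (E : div7 P) (U : {fset P}) :
  (forall k v, E k v != 0%N -> v \in U) -> mu E != 0 ->
  `|mu E| * x ^+ totdeg deg E <= \prod_(v : U) psi (val v) [set k | E k (val v) != 0%N].
Proof.
move=> HU Hne; have [H1 H2] := mu_props Hmu Hne.
rewrite (totdeg_eq deg HU H1).
apply: le_trans (ler_wpM2r (exprn_ge0 _ x0) (mu_bound Hmu HU)) _.
rewrite -prodrXr -[X in _ * X <= _]prodrXr -big_split /= big_seq_fsetE /=.
apply: ler_prod => v _; rewrite mulr_ge0 ?exprn_ge0 //=.
rewrite /psi; case: eqP => [->|hA].
  by rewrite cards0 mul0n !expr0 mulr1.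
set a := #|_|.
have a2 : (2 <= a)%N.
  have := H2 (val v); rewrite -/a.
  have : a != 0%N by rewrite /a cards_eq0; apply/eqP.
  by case: a => [|[|]].
have a7 : (a <= 7)%N by rewrite /a (leq_trans (max_card _)) ?card_ord.
apply: ler_pM; rewrite ?exprn_ge0 //.
  rewrite (_ : 128 = 2 ^+ 7); last by rewrite -natrX.
  by rewrite ler_eXn2l ?ltr1n.
rewrite -exprM; apply: ler_wiXn2l => //.
by rewrite leq_mul2r a2 orbT.
Qed.

End M2.

Section M3.
Local Open Scope ring_scope.
Variable R : realType.
Variable P : choiceType.
Variable deg : P -> nat.
Variable x : R.
Hypothesis x0 : 0 <= x.
Variables c q : nat.
Hypothesis hr : x ^+ 2 * q%:R < 1.
Hypothesis hcount : forall (d : nat) (s : seq P), uniq s ->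
    (forall v, v \in s -> deg v = d) -> (size s <= c * q ^ d)%N.

Lemma deg_sum (U : {fset P}) :
  \sum_(v : U) (x ^+ 2) ^+ deg (val v) <= c%:R * (1 - x ^+ 2 * q%:R)^-1.
Proof.
set y := x ^+ 2.
have y0 : 0 <= y by rewrite exprn_ge0.
set Dm := (\max_(v : U) deg (val v)).+1.
have E1 : \sum_(v : U) y ^+ deg (val v) =
    \sum_(v : U) \sum_(d < Dm | d == deg (val v) :> nat) y ^+ d.
  apply: eq_bigr => v _; rewrite big_ord1_eq ltnS.
  by rewrite (@leq_bigmax _ (fun v : U => deg (val v)) v).
rewrite E1 (exchange_big_dep xpredT) //=.
apply: le_trans (_ : _ <= \sum_(d < Dm) c%:R * (y * q%:R) ^+ d) _.
  apply: ler_sum => d _; rewrite sumr_const.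
  set n := #|_|.
  have hn : (n <= c * q ^ d)%N.
    have := @hcount d [seq val v | v <- enum [pred v : U | d == deg (val v) :> nat]].
    rewrite size_map -cardE; apply.
      by rewrite map_inj_uniq ?enum_uniq //; exact: val_inj.
    move=> v /mapP [u]; rewrite mem_enum inE => /eqP -> -> //.
  rewrite (_ : y ^+ d *+ n = y ^+ d * n%:R); last by rewrite mulr_natr.
  rewrite [(y * _) ^+ _]exprMn -natrX mulrCA; apply: ler_wpM2l; first exact: exprn_ge0.
  by rewrite -natrM ler_nat.
rewrite -big_distrr /=; apply: ler_wpM2l; first exact: ler0n.
apply: geom_le; first by rewrite mulr_ge0 ?ler0n.
exact: hr.
Qed.

End M3.

Section M4.
Local Open Scope ring_scope.
Variable R : realType.
Variable P : choiceType.
Variable deg : P -> nat.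
Variable mu : div7 P -> R.
Hypothesis Hmu : is_muS mu.
Variable x : R.
Hypothesis x0 : 0 <= x.
Hypothesis x1 : x <= 1.
Variables c q : nat.
Hypothesis hr : x ^+ 2 * q%:R < 1.
Hypothesis hcount : forall (d : nat) (s : seq P), uniq s ->
    (forall v, v \in s -> deg v = d) -> (size s <= c * q ^ d)%N.

Lemma psi_ge0 v A : 0 <= psi deg x v A.
Proof. by rewrite /psi; case: ifP => _; rewrite ?ler01 // mulr_ge0 ?exprn_ge0 ?exprn_ge0. Qed.

Lemma main_bound : exists M : R, forall s : seq (div7 P), uniq s ->
  \sum_(E <- s) `|mu E| * x ^+ totdeg deg E <= M.
Proof.
set K : R := #|{: {set 'I_7}}|%:R * 128.
exists (expR (K * (c%:R * (1 - x ^+ 2 * q%:R)^-1))) => s us.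
set U : {fset P} := (\bigcup_(E <- s) suppD E)%fset.
have HU : forall E, E \in s -> forall k v, E k v != 0%N -> v \in U.
  move=> E hE k v h; apply/bigfcupP; exists E; first by rewrite hE.
  exact: suppDP h.
pose pat (E : div7 P) : {ffun U -> {set 'I_7}} := [ffun v : U => [set k | E k (val v) != 0%N]].
pose Psi (f : {ffun U -> {set 'I_7}}) := \prod_(v : U) psi deg x (val v) (f v).
have Psi0 : forall f, 0 <= Psi f by move=> f; apply: prodr_ge0 => v _; exact: psi_ge0.
apply: le_trans (_ : _ <= \sum_(E <- s | mu E != 0) Psi (pat E)) _.
  rewrite [X in _ <= X]big_mkcond /= !big_seq; apply: ler_sum => E hE.
  case: eqP => [->|/eqP hne]; first by rewrite normr0 mul0r.
  apply: le_trans (local_bound deg Hmu x0 x1 (HU E hE) hne) _.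
  by rewrite /Psi le_eqVlt; apply/orP; left; apply/eqP/eq_bigr => v _; rewrite ffunE.
set t := [seq pat E | E <- [seq E <- s | mu E != 0]].
have -> : \sum_(E <- s | mu E != 0) Psi (pat E) = \sum_(f <- t) Psi f.
  by rewrite big_map big_filter.
have ut : uniq t.
  rewrite map_inj_in_uniq ?filter_uniq // => E1 E2.
  rewrite !mem_filter => /andP [h1 hE1] /andP [h2 hE2] hp.
  have [a1 _] := mu_props Hmu h1; have [a2 _] := mu_props Hmu h2.
  apply: div7_ext => k v.
  case hv: (v \in U); last first.
    have z1 : E1 k v = 0%N by apply/eqP; apply: contraFT hv; apply: HU.
    have z2 : E2 k v = 0%N by apply/eqP; apply: contraFT hv; apply: HU.
    by rewrite z1 z2.
  have := congr1 (fun f : {ffun U -> {set 'I_7}} => k \in f [` hv]%fset) hp.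
  rewrite /pat !ffunE !inE /=.
  by have := a1 k v; have := a2 k v; case: (E1 k v) => [|[|]]; case: (E2 k v) => [|[|]].
rewrite big_uniq //.
apply: le_trans (_ : _ <= \sum_(f : {ffun U -> {set 'I_7}}) Psi f) _.
  rewrite [X in _ <= X](bigID (mem t)) /= lerDl; exact: sumr_ge0.
rewrite /Psi -(bigA_distr_bigA (fun (v : U) (A : {set 'I_7}) => psi deg x (val v) A)) /=.
apply: le_trans (_ : _ <= \prod_(v : U) expR (K * (x ^+ 2) ^+ deg (val v))) _.
  apply: ler_prod => v _; rewrite sumr_ge0 /=; last by move=> A _; exact: psi_ge0.
  apply: le_trans (expR_ge1Dx _).
  rewrite (bigD1 set0) //= {1}/psi eqxx lerD2l.
  apply: le_trans (_ : _ <= \sum_(A : {set 'I_7}) 128 * (x ^+ 2) ^+ deg (val v)) _.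
    rewrite [X in _ <= X](bigD1 set0) //=.
    apply: le_trans (_ : _ <= \sum_(A | A != set0) 128 * (x ^+ 2) ^+ deg (val v)) _.
      by apply: ler_sum => A hA; rewrite /psi (negbTE hA).
    by rewrite lerDr mulr_ge0 ?exprn_ge0.
  have -> : forall a : R, \sum_(A : {set 'I_7}) a = #|{: {set 'I_7}}|%:R * a.
    by move=> a; rewrite sumr_const mulr_natl.
  by rewrite /K mulrA.
rewrite -expR_sum ler_expR -big_distrr /=; apply: ler_wpM2l.
  by rewrite mulr_ge0 ?ler0n.
exact: deg_sum.
Qed.
End M4.

Local Open Scope ring_scope.

Unset Implicit Arguments.

Theorem mainTheorem11 (R : realType) (p k : nat) (P : choiceType)
  (deg : P -> nat) (mu : div7 P -> R) :
  prime p -> (0 < k)%N -> curve_points (p ^ k) deg -> is_muS mu ->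
  forall eps : R, 0 < eps ->
  exists M : R, forall s : seq (div7 P), uniq s ->
    \sum_(E <- s) `|mu E| * ((p ^ k)%:R `^ (- (2^-1 + eps) * (totdeg deg E)%:R))
      <= M.
Proof.
move=> hp hk hc Hmu eps heps.
set q := (p ^ k)%N.
have q1 : (1 < q)%N.
  apply: leq_trans (prime_gt1 hp) _.
  by rewrite -{1}(expn1 p); apply: leq_pexp2l; [exact: prime_gt0|].
have q0 : (0 < q)%N by apply: ltn_trans q1.
have [c hcount] := count_deg q0 hc.
set qR : R := q%:R.
have qR0 : 0 < qR by rewrite ltr0n.
set L := ln qR.
have L0 : 0 < L by apply: ln_gt0; rewrite ltr1n.
set a : R := - (2^-1 + eps).
set x := qR `^ a.
have xE : x = expR (a * L) by rewrite /x /powR (gt_eqF qR0).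
have x0 : 0 <= x by exact: powR_ge0.
have x1 : x <= 1.
  have ha : a < 0 by rewrite /a oppr_lt0 addr_gt0 // invr_gt0 ltr0n.
  rewrite xE; apply: ltW; rewrite expR_lt1; nra.
have hr : x ^+ 2 * q%:R < 1.
  rewrite xE -expRM_natl -[q%:R](@lnK R) ?posrE // -/qR -/L -expRD expR_lt1.
  rewrite /a (_ : 2%:R * (- (2^-1 + eps) * L) + L = - (2 * eps * L)).
    by rewrite oppr_lt0 !mulr_gt0.
  by field.
have [M HM] := main_bound Hmu x0 x1 hr hcount.
exists M => s us; apply: le_trans (HM s us).
rewrite le_eqVlt; apply/orP; left; apply/eqP; apply: eq_bigr => E _.
by rewrite powRrM powR_mulrn.
Qed.
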